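(* Let $k\geq2$. Then $$F_k(x,p)=\sum_{j=0}^{k-2}J_j(p)x^j+\frac{x^{k-1}}{1-(k-1)x^2}\bigl((k-1)J_{k-2}(p)x+J_{k-1}(p)\bigr).$$ Moreover, for all $n\geq0$, the number of involutions of length $k+2n$ that avoid all patterns in $\mathcal{F}_k$ is $(k-1)^{n+1}I_{k-2}$, and the number of involutions of length $k+2n-1$ that avoid all patterns in $\mathcal{F}_k$ is $(k-1)^nI_{k-1}$.
   Context: $\mathcal{F}_k=\{\sigma\in\mathfrak{S}_k:\sigma_1=1\}$. An involution is a permutation $\pi$ with $\pi_{\pi_i}=i$ for all $i$; $\mathcal{I}_n(T)$ is the set of involutions of $[n]$ avoiding (in the classical pattern sense) every pattern in $T$; $\mathcal{I}_0$ contains only the empty permutation. $I_n$ is the number of involutions of $[n]$. $J_n(p)=\sum_{\pi\in\mathcal{I}_n}p^{\mathrm{fix}(\pi)}$, where $\mathrm{fix}(\pi)$ is the number of fixed points; $J_0=1,J_1=p$, $J_n=pJ_{n-1}+(n-1)J_{n-2}$. $F_k(x,p)=\sum_{n\ge0}\sum_{\pi\in\mathcal{I}_n(\mathcal{F}_k)}p^{\mathrm{fix}(\pi)}x^n$. *)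

(* Defs.v *)
From HB Require Import structures.
From mathcomp Require Import all_boot all_order all_algebra all_fingroup.
Set Implicit Arguments. Unset Strict Implicit. Unset Printing Implicit Defensive.
Import GRing.Theory.
Local Open Scope ring_scope.

(* Permutations of [n] are represented by 'S_n = {perm 'I_n}, positions 0..n-1. *)

Definition involutionb n (pi : 'S_n) : bool := [forall i, pi (pi i) == i].

Definition fixn n (pi : 'S_n) : nat := #|[set i | pi i == i]|.

Definition containsb n k (pi : 'S_n) (sigma : 'S_k) : bool :=
  [exists f : {ffun 'I_k -> 'I_n},
     [forall a : 'I_k, forall b : 'I_k,
        ((a < b)%N ==> (f a < f b)%N) &&
        ((pi (f a) < pi (f b))%N == (sigma a < sigma b)%N)]].

(* sigma belongs to F_k : its first entry is 1, i.e. sigma(0) = 0 in 0-based terms *)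
Definition inFk k (sigma : 'S_k) : bool :=
  [forall i : 'I_k, (val i == 0%N) ==> (val (sigma i) == 0%N)].

Definition avoidsFk k n (pi : 'S_n) : bool :=
  [forall sigma : 'S_k, inFk sigma ==> ~~ containsb pi sigma].

Definition Inv (n : nat) : nat := #|[set pi : 'S_n | involutionb pi]|.

(* J_n(p) = sum over involutions of [n] of p^fix, as a polynomial in p *)
Definition J (n : nat) : {poly int} :=
  \sum_(pi : 'S_n | involutionb pi) 'X^(fixn pi).

(* coefficient of x^n in F_k(x,p): sum over I_n(F_k) of p^fix *)
Definition Fcoef (k n : nat) : {poly int} :=
  \sum_(pi : 'S_n | involutionb pi && avoidsFk k pi) 'X^(fixn pi).

Definition numAvoid (k n : nat) : nat :=
  #|[set pi : 'S_n | involutionb pi && avoidsFk k pi]|.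

(* Formal power series in x with coefficients in Z[p], as coefficient functions,
   with the Cauchy product. *)
Definition fps := nat -> {poly int}.
Definition fps_mul (f g : fps) : fps :=
  fun n => \sum_(i < n.+1) f i * g (n - i)%N.
(* the power series of a polynomial in x (x is the outer variable) *)
Definition fps_of (q : {poly {poly int}}) : fps := fun n => q`_n.

Definition denom (k : nat) : {poly {poly int}} := 1 - (k.-1)%:R * 'X^2.

(* right-hand side times the denominator:
   (1-(k-1)x^2) * sum_{j=0}^{k-2} J_j x^j + x^(k-1) ((k-1) J_{k-2} x + J_{k-1}) *)
Definition numer (k : nat) : {poly {poly int}} :=
  denom k * (\sum_(j < k.-1) (J j)%:P * 'X^j)
  + 'X^(k.-1) * ((k.-1)%:R * (J (k.-2))%:P * 'X + (J (k.-1))%:P).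

(* Main.v *)
Require Import Defs.
From HB Require Import structures.
From mathcomp Require Import all_boot all_order all_algebra all_fingroup.
From mathcomp Require Import zify.
From Stdlib Require Import FunctionalExtensionality.
Set Implicit Arguments. Unset Strict Implicit. Unset Printing Implicit Defensive.

Section Emb.
Variables (m : nat) (t : 'I_m.+2).
Hypothesis t0 : t != ord0.

Definition emb (j : 'I_m) : 'I_m.+2 := lift t (lift ord0 j).

Lemma emb_val j : val (emb j) = if (j.+1 < t)%N then j.+1 else j.+2.
Proof.
rewrite /emb /= /bump /=.
have := t0; rewrite -(inj_eq val_inj) /= => tn0.
move/eqP: tn0 => tn0; case: (ltnP j.+1 t) => h; case: (leqP t (1+j)) => h2 /=; lia.
Qed.

Lemma emb_neq0 j : emb j != ord0.
Proof. rewrite -(inj_eq val_inj) emb_val /=; by case: ifP. Qed.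

Lemma emb_neqt j : emb j != t.
Proof. rewrite -(inj_eq val_inj) emb_val /=; case: ifP => h; apply/eqP; lia. Qed.

Lemma emb_lt a b : (emb a < emb b)%N = (a < b)%N.
Proof.
rewrite !emb_val; move: (nat_of_ord a) (nat_of_ord b) (nat_of_ord t) => x y z.
case: ifP => h1; case: ifP => h2; apply/idP/idP => h3; lia.
Qed.

Lemma emb_inj : injective emb.
Proof.
move=> a b h; case: (ltngtP a b) => hab; last exact: val_inj.
  by have := emb_lt a b; rewrite h ltnn hab.
by have := emb_lt b a; rewrite h ltnn hab.
Qed.

Lemma emb_dec (x : 'I_m.+2) : x = ord0 \/ x = t \/ exists j, x = emb j.
Proof.
case: (eqVneq x ord0) => [->|x0]; first by left.
case: (eqVneq x t) => [->|xt]; first by right; left.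
right; right.
have tn0 : (0 < t)%N by rewrite lt0n; have := t0; rewrite -(inj_eq val_inj).
have xn0 : (0 < x)%N by rewrite lt0n; have := x0; rewrite -(inj_eq val_inj).
have xnt : (nat_of_ord x != nat_of_ord t) by [].
move/eqP: xnt => xnt.
case: (ltnP x t) => h.
  have hj : (x.-1 < m)%N.
    by have := ltn_ord t; lia.
  exists (Ordinal hj); apply: val_inj; rewrite emb_val /=; case: ifP; lia.
have hj : (x.-2 < m)%N.
  by have := ltn_ord x; lia.
exists (Ordinal hj); apply: val_inj; rewrite emb_val /=; case: ifP; lia.
Qed.

End Emb.

Section Ins.
Variables (m : nat) (t : 'I_m.+2).
Hypothesis t0 : t != ord0.
Variable s : 'S_m.

Definition hf (x : 'I_m.+2) : 'I_m.+2 :=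
  if x == ord0 then t else if x == t then ord0 else
  if [pick j | emb t j == x] is Some j then emb t (s j) else x.

Lemma hf0 : hf ord0 = t. Proof. by rewrite /hf eqxx. Qed.
Lemma hft : hf t = ord0. Proof. by rewrite /hf eqxx (negbTE t0). Qed.
Lemma hfe j : hf (emb t j) = emb t (s j).
Proof.
rewrite /hf (negbTE (emb_neq0 t0 j)) (negbTE (emb_neqt t0 j)).
case: pickP => [j' /eqP /(emb_inj t0) -> // | /(_ j)]; by rewrite eqxx.
Qed.

Lemma hf_inj : injective hf.
Proof.
have n0t : (ord0 == t) = false by apply/negbTE; rewrite eq_sym.
move=> x y; case: (emb_dec t0 x) => [->|[->|[j ->]]];
  case: (emb_dec t0 y) => [->|[->|[j' ->]]]; rewrite ?hf0 ?hft ?hfe // => h.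
all: try (move: h; move/eqP; rewrite ?(eq_sym ord0) ?(negbTE t0) ?(negbTE (emb_neqt t0 _)) ?(negbTE (emb_neq0 t0 _)) ?(eq_sym t) ?(negbTE (emb_neqt t0 _)) ?(negbTE (emb_neq0 t0 _)) //; fail).

- by move/(emb_inj t0)/perm_inj: h => ->.
Qed.

Definition Hp : 'S_m.+2 := perm hf_inj.

Lemma Hp0 : Hp ord0 = t. Proof. by rewrite permE hf0. Qed.
Lemma Hpt : Hp t = ord0. Proof. by rewrite permE hft. Qed.
Lemma Hpe j : Hp (emb t j) = emb t (s j). Proof. by rewrite permE hfe. Qed.

Lemma Hp_invol : involutionb Hp = involutionb s.
Proof.
apply/forallP/forallP => h x.
  by have := h (emb t x); rewrite !Hpe (inj_eq (emb_inj t0)).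
case: (emb_dec t0 x) => [->|[->|[j ->]]].
- by rewrite Hp0 Hpt.
- by rewrite Hpt Hp0.
- by rewrite !Hpe (inj_eq (emb_inj t0)).
Qed.

Lemma Hp_fix : fixn Hp = fixn s.
Proof.
rewrite /fixn -(card_imset _ (emb_inj t0)); apply: eq_card => x; rewrite inE.
case: (emb_dec t0 x) => [->|[->|[j ->]]].
- rewrite Hp0 (negbTE t0); apply/esym/negbTE/imsetP => [[j _ /eqP]].
  by rewrite eq_sym (negbTE (emb_neq0 t0 j)).
- rewrite Hpt eq_sym (negbTE t0); apply/esym/negbTE/imsetP => [[j _ /eqP]].
  by rewrite eq_sym (negbTE (emb_neqt t0 j)).
- by rewrite Hpe (inj_eq (emb_inj t0)) mem_imset ?inE //; exact: emb_inj.
Qed.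

Lemma contains_emb k (tau : 'S_k) : containsb s tau -> containsb Hp tau.
Proof.
case/existsP => f /forallP hf'.
apply/existsP; exists [ffun a => emb t (f a)]; apply/forallP => a; apply/forallP => b.
by rewrite !ffunE !Hpe !(emb_lt t0); exact: (forallP (hf' a) b).
Qed.

End Ins.

Lemma cnt_bound (n k' : nat) (t : 'I_n.+1) (g : 'I_k'.+1 -> 'I_n.+1) :
  {in [set~ ord0] &, injective g} -> (forall b, b != ord0 -> (t < g b)%N) ->
  (k' <= n - t)%N.
Proof.
move=> gi gb.
have h1 : #|g @: [set~ ord0]| = k' by rewrite card_in_imset // cardsC1 card_ord.
have h2 : g @: [set~ ord0] \subset [set (inord (t.+1 + val j) : 'I_n.+1) | j : 'I_(n - t)].
  apply/subsetP => v /imsetP [b hb ->].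
  have hv : (t < g b)%N by apply: gb; move: hb; rewrite in_setC1.
  have hj : (g b - t.+1 < n - t)%N by have := ltn_ord (g b); lia.
  apply/imsetP; exists (Ordinal hj) => //; apply: val_inj; rewrite /= inordK; lia.
rewrite -h1; apply: leq_trans (subset_leq_card h2) _.
by apply: leq_trans (leq_imset_card _ _) _; rewrite card_ord.
Qed.

Lemma std_exists k n (g : 'I_k -> 'I_n) : injective g ->
  exists s : 'S_k, forall a b, (g a < g b)%N = (s a < s b)%N.
Proof.
move=> ginj.
pose r a := #|[set b | (g b < g a)%N]|.
have rlt a : (r a < k)%N.
  have : [set b | (g b < g a)%N] \subset [set~ a].
    by apply/subsetP=> b; rewrite !inE; apply: contraTneq => ->; rewrite ltnn.
  move/subset_leq_card; rewrite cardsC1 card_ord /r; have := ltn_ord a; lia.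
have rmono a b : (g a < g b)%N -> (r a < r b)%N.
  move=> h; apply: proper_card; apply/properP; split.
    by apply/subsetP => c; rewrite !inE => hc; exact: ltn_trans hc h.
  by exists a; rewrite !inE ?ltnn.
have rinj : injective (fun a => Ordinal (rlt a)).
  move=> a b /(congr1 val) /= h; case: (ltngtP (g a) (g b)) => hab.
  - by have := rmono _ _ hab; rewrite h ltnn.
  - by have := rmono _ _ hab; rewrite h ltnn.
  - by apply: ginj; apply: val_inj.
exists (perm rinj) => a b; rewrite !permE /=.
apply/idP/idP => [/rmono//|h]; case: (ltngtP (g a) (g b)) => // hab.
  by have := rmono _ _ hab; lia.
have hh : a = b by apply: ginj; apply: val_inj.
by move: h; rewrite hh ltnn.
Qed.

Lemma contains_back (m k' : nat) (t : 'I_m.+2) (t0 : t != ord0) (s : 'S_m)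
  (tau : 'S_k'.+1) : (0 < k')%N -> (m.+2 - k' <= t)%N -> inFk tau ->
  containsb (Hp t0 s) tau -> containsb s tau.
Proof.
move=> k0 tb /forallP hin /existsP [f /forallP hf].
have H a b := forallP (hf a) b.
have fmono (a b : 'I_k'.+1) : (a < b)%N -> (f a < f b)%N.
  move=> h; have /andP[hi _] := H a b; exact: (implyP hi h).
have tau0 : val (tau ord0) = 0%N by have := hin ord0; rewrite eqxx /= => /eqP.
have tault b : b != ord0 -> (tau ord0 < tau b)%N.
  move=> hb; rewrite tau0 lt0n; apply: contra hb => /eqP h.
  by apply/eqP; apply: (@perm_inj _ tau); apply: val_inj => /=; rewrite h tau0.
have Hlt b : b != ord0 -> (Hp t0 s (f ord0) < Hp t0 s (f b))%N.
  by move=> hb; have /andP[_ /eqP ->] := H ord0 b; exact: tault.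
have f0lt b : b != ord0 -> (f ord0 < f b)%N.
  by move=> hb; apply: fmono; rewrite lt0n; move: hb; rewrite -(inj_eq val_inj).
have finj : injective f.
  move=> a b h; case: (ltngtP a b) => hab; last exact: val_inj.
  - by have := fmono _ _ hab; rewrite h ltnn.
  - by have := fmono _ _ hab; rewrite h ltnn.
have bound (g : 'I_k'.+1 -> 'I_m.+2) : injective g ->
    (forall b, b != ord0 -> (t < g b)%N) -> False.
  move=> gi gb; have := cnt_bound (fun x y _ _ => gi x y) gb; lia.
have fn0 a : f a != ord0.
  case: (eqVneq a ord0) => [->|ha].
    apply/negP => /eqP h0; apply: (bound (fun b => Hp t0 s (f b))).
      by move=> x y /perm_inj; exact: finj.
    by move=> b hb; have := Hlt b hb; rewrite h0 Hp0.
  by apply/negP => /eqP h0; have := f0lt a ha; rewrite h0 ltn0.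
have fnt a : f a != t.
  case: (eqVneq a ord0) => [->|ha].
    by apply/negP => /eqP h0; apply: (bound f finj) => b hb; rewrite -h0; exact: f0lt.
  by apply/negP => /eqP h0; have := Hlt a ha; rewrite h0 Hpt ltn0.
have : forall a, exists j, f a = emb t j.
  move=> a; case: (emb_dec t0 (f a)) => [h|[h|//]].
    by move: (fn0 a); rewrite h eqxx.
  by move: (fnt a); rewrite h eqxx.
case/fin_all_exists => g hg.
apply/existsP; exists [ffun a => g a]; apply/forallP => a; apply/forallP => b.
by have := H a b; rewrite !ffunE !hg !Hpe !(emb_lt t0).
Qed.

Lemma avoid_Hp (m k' : nat) (t : 'I_m.+2) (t0 : t != ord0) (s : 'S_m) :
  (0 < k')%N -> (m.+2 - k' <= t)%N ->
  avoidsFk k'.+1 (Hp t0 s) = avoidsFk k'.+1 s.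
Proof.
move=> k0 tb; apply/forallP/forallP => h tau; apply/implyP => hin;
  have := implyP (h tau) hin; apply: contra.
  exact: contains_emb.
exact: contains_back.
Qed.

Lemma surj_bound (m k' : nat) (pi : 'S_m.+2) : (0 < k')%N -> (k' <= m.+1)%N ->
  involutionb pi -> avoidsFk k'.+1 pi -> (m.+2 - k' <= pi ord0)%N.
Proof.
move=> k0 km /forallP inv /forallP av.
set t := pi ord0.
have pit : pi t = ord0 by apply/eqP; exact: inv ord0.
rewrite leqNgt; apply/negP => ht.
have hfv (a : 'I_k'.+1) : (t + a < m.+2)%N by have := ltn_ord a; lia.
pose f a : 'I_m.+2 := Ordinal (hfv a).
have finj : injective f by move=> a b /(congr1 val) /= h; apply: ord_inj; lia.
have [s hs] := @std_exists _ _ (fun a => pi (f a)) (fun a b h => finj _ _ (perm_inj h)).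
have f0 : f ord0 = t by apply: val_inj; rewrite /= addn0.
have s0 : val (s ord0) = 0%N.
  case: (eqVneq (nat_of_ord (s ord0)) 0%N) => // hs0; exfalso.
  set b := (s^-1)%g ord0.
  have sb : s b = ord0 by rewrite /b permKV.
  have bn0 : b != ord0 by apply: contra hs0 => /eqP hb; rewrite -{1}hb sb.
  have : (pi (f ord0) < pi (f b))%N.
    rewrite f0 pit /= lt0n; apply/eqP => h0.
    have : pi (f b) = pi t by apply: ord_inj; rewrite h0 pit.
    move/perm_inj => /(congr1 val) /= hb.
    by move: bn0; rewrite -(inj_eq val_inj) /=; lia.
  by rewrite hs sb ltn0.
have hin : inFk s.
  apply/forallP => i; apply/implyP => /eqP hi.
  have -> : i = ord0 by apply: val_inj; rewrite hi.
  by rewrite s0.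
have hc : containsb pi s.
  apply/existsP; exists [ffun a => f a]; apply/forallP => a; apply/forallP => b.
  by rewrite !ffunE hs eqxx andbT; apply/implyP => hab /=; rewrite ltn_add2l.
by move: (av s); rewrite hin hc.
Qed.

Lemma surj_ex (m : nat) (pi : 'S_m.+2) (t0 : pi ord0 != ord0) :
  involutionb pi -> exists s, pi = Hp t0 s.
Proof.
move=> /forallP inv.
have pit : pi (pi ord0) = ord0 by apply/eqP; exact: inv ord0.
have : forall j, exists z, pi (emb (pi ord0) j) = emb (pi ord0) z.
  move=> j; case: (emb_dec t0 (pi (emb (pi ord0) j))) => [h|[h|//]].
    have : pi (emb (pi ord0) j) = pi (pi ord0) by rewrite h pit.
    by move/perm_inj => h2; move: (emb_neqt t0 j); rewrite h2 eqxx.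
  have : pi (emb (pi ord0) j) = pi ord0 by rewrite h.
  by move/perm_inj=> h2; move: (emb_neq0 t0 j); rewrite h2 eqxx.
case/fin_all_exists => g hg.
have ginj : injective g.
  move=> a b h; apply: (emb_inj t0); apply: (@perm_inj _ pi); by rewrite !hg h.
exists (perm ginj); apply/permP => x; case: (emb_dec t0 x) => [->|[->|[j ->]]].
- by rewrite Hp0.
- by rewrite Hpt.
- by rewrite Hpe permE hg.
Qed.

Lemma avoid_small k n (pi : 'S_n) : (n < k)%N -> avoidsFk k pi.
Proof.
move=> nk; apply/forallP => tau; apply/implyP => _.
apply/negP => /existsP [f /forallP hf].
have fmono (a b : 'I_k) : (a < b)%N -> (f a < f b)%N.
  by move=> h; have /andP[hi _] := forallP (hf a) b; exact: (implyP hi h).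
have finj : injective f.
  move=> a b h; case: (ltngtP a b) => hab; last exact: val_inj.
  - by have := fmono _ _ hab; rewrite h ltnn.
  - by have := fmono _ _ hab; rewrite h ltnn.
by have := leq_card f finj; rewrite !card_ord; lia.
Qed.

Lemma Fcoef_small k n : (n < k)%N -> Fcoef k n = J n.
Proof. by move=> nk; apply: eq_bigl => pi; rewrite avoid_small // andbT. Qed.

Lemma Hp_eq m (t1 t2 : 'I_m.+2) (p1 : t1 != ord0) (p2 : t2 != ord0) s :
  t1 = t2 -> Hp p1 s = Hp p2 s.
Proof. by move=> e; subst t2; congr Hp; apply: bool_irrelevance. Qed.

Section Rec.
Variables (k' m : nat).
Hypothesis k0 : (0 < k')%N.
Hypothesis km : (k'.+1 <= m.+2)%N.

Definition tc (c : 'I_k') : 'I_m.+2 := inord (m.+2 - k' + c).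
Lemma tc_val c : nat_of_ord (tc c) = (m.+2 - k' + c)%N.
Proof. by rewrite /tc inordK //; have := ltn_ord c; lia. Qed.
Lemma tc0 c : tc c != ord0.
Proof. by rewrite -(inj_eq val_inj) /= tc_val; apply/eqP; lia. Qed.
Lemma tcb c : (m.+2 - k' <= tc c)%N.
Proof. by rewrite tc_val leq_addr. Qed.

Definition hmap (x : 'I_k' * 'S_m) : 'S_m.+2 := Hp (tc0 x.1) x.2.

Definition PP n (pi : 'S_n) := involutionb pi && avoidsFk k'.+1 pi.

Lemma hmapP x : PP (hmap x) = PP x.2.
Proof. by rewrite /PP /hmap Hp_invol avoid_Hp // tcb. Qed.

Lemma hmap_inj : injective hmap.
Proof.
move=> [c1 s1] [c2 s2]; rewrite /hmap /= => h.
have e : c1 = c2.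
  have := congr1 (fun p : 'S_m.+2 => nat_of_ord (p ord0)) h; rewrite /= !Hp0 !tc_val.
  by move=> hh; apply: ord_inj; lia.
subst c2; congr pair; apply/permP => j.
have := congr1 (fun p : 'S_m.+2 => p (emb (tc c1) j)) h; rewrite /= !Hpe.
exact: (emb_inj (tc0 c1)).
Qed.

Lemma PP_image : [set pi : 'S_m.+2 | PP pi] = hmap @: [set x | PP x.2].
Proof.
apply/eqP; rewrite eqEsubset; apply/andP; split; apply/subsetP => pi; last first.
  by case/imsetP => x; rewrite !inE => hx ->; rewrite hmapP.
rewrite inE => hp; have /andP[hi ha] := hp.
have km' : (k' <= m.+1)%N by lia.
have tb := surj_bound k0 km' hi ha.
have hc : (pi ord0 - (m.+2 - k') < k')%N by have := ltn_ord (pi ord0); lia.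
have t0 : pi ord0 != ord0 by rewrite -(inj_eq val_inj) /=; apply/eqP; lia.
have [s hs] := surj_ex t0 hi.
apply/imsetP; exists (Ordinal hc, s).
  rewrite inE /= /PP -(avoid_Hp t0 s k0 tb) -(Hp_invol t0) -hs; exact: hp.
rewrite /hmap /=; apply: (etrans hs); apply: Hp_eq; apply: ord_inj; rewrite tc_val /=; lia.
Qed.

Lemma Fcoef_rec : Fcoef k'.+1 m.+2 = (Fcoef k'.+1 m *+ k')%R.
Proof.
rewrite /Fcoef.
rewrite (eq_bigl (fun pi => pi \in [set pi : 'S_m.+2 | PP pi])); last first.
  by move=> pi; rewrite inE.
rewrite PP_image big_imset /=; last by move=> x y _ _; exact: hmap_inj.
rewrite (eq_bigr (fun x => 'X^(fixn x.2))%R); last by move=> x _; rewrite /hmap Hp_fix.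
rewrite (eq_bigl (fun x : 'I_k' * 'S_m => true && PP x.2)); last by move=> x; rewrite inE.
rewrite -(pair_big_dep xpredT (fun _ (s : 'S_m) => PP s) (fun _ s => 'X^(fixn s))%R) /=.
by rewrite GRing.sumr_const card_ord.
Qed.

End Rec.

Import GRing.Theory.
Local Open Scope ring_scope.

Lemma numAvoid_eval k n : (numAvoid k n)%:Z = (Fcoef k n).[1].
Proof.
rewrite /Fcoef horner_sum (eq_bigr (fun _ => 1)); last first.
  by move=> pi _; rewrite hornerXn expr1n.
rewrite /numAvoid -sum1_card -natz natr_sum.
by apply: eq_bigl => pi; rewrite inE.
Qed.

Lemma Inv_eval n : (Inv n)%:Z = (J n).[1].
Proof.
rewrite /J horner_sum (eq_bigr (fun _ => 1)); last first.
  by move=> pi _; rewrite hornerXn expr1n.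
rewrite /Inv -sum1_card -natz natr_sum.
by apply: eq_bigl => pi; rewrite inE.
Qed.

Lemma numAvoid_small k n : (n < k)%N -> numAvoid k n = Inv n.
Proof.
move=> nk; rewrite /numAvoid /Inv; apply: eq_card => pi.
by rewrite !inE avoid_small // andbT.
Qed.

Lemma numAvoid_rec k' m : (0 < k')%N -> (k'.+1 <= m.+2)%N ->
  numAvoid k'.+1 m.+2 = (k' * numAvoid k'.+1 m)%N.
Proof.
move=> k0 km; apply/eqP; rewrite -eqz_nat; apply/eqP.
rewrite numAvoid_eval Fcoef_rec // hornerMn -numAvoid_eval.
by rewrite -natz -mulr_natl -natrM natz.
Qed.

Lemma sum_delta (G : nat -> {poly int}) n j :
  \sum_(i < n.+1) G i * ((n - i)%N == j)%:R = if (j <= n)%N then G (n - j)%N else 0.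
Proof.
case: leqP => hj.
  rewrite (bigD1 (inord (n - j))) //= inordK; last lia.
  rewrite (subKn hj) eqxx mulr1 big1 ?addr0 // => i hi.
  rewrite (_ : (n - i == j)%N = false) ?mulr0 //.
  apply/negbTE; apply: contra hi => /eqP h; apply/eqP; apply: ord_inj.
  by rewrite inordK; have := ltn_ord i; lia.
rewrite big1 // => i _; rewrite (_ : (n - i == j)%N = false) ?mulr0 //.
by apply/negbTE/eqP; have := ltn_ord i; lia.
Qed.

Lemma coef_denom k' j : (denom k'.+1)`_j = (j == 0)%N%:R - ((j == 2)%N%:R *+ k').
Proof. by rewrite /denom coefB coef1 /= mulr_natl coefMn coefXn. Qed.

Lemma fps_lhs k' n : fps_mul (Fcoef k'.+1) (fps_of (denom k'.+1)) n =
  Fcoef k'.+1 n - (if (2 <= n)%N then Fcoef k'.+1 (n - 2) *+ k' else 0).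
Proof.
rewrite /fps_mul /fps_of.
under eq_bigr => i _ do rewrite coef_denom mulrBr (mulrnAr _ _ k').
rewrite sumrB sumrMnl !sum_delta subn0 leq0n.
by case: ifP; rewrite ?mul0rn.
Qed.

Definition Qp k' : {poly {poly int}} := \sum_(j < k') (J j)%:P * 'X^j.

Lemma coefQ k' i : (Qp k')`_i = if (i < k')%N then J i else 0.
Proof.
rewrite /Qp (eq_bigr (fun j : 'I_k' => J j *: 'X^j)).
  by rewrite -poly_def coef_poly.
by move=> j _; rewrite mul_polyC.
Qed.

Lemma coef_numer k' n : (numer k'.+1)`_n =
  (Qp k')`_n - (if (n < 2)%N then 0 else (Qp k')`_(n - 2)) *+ k' +
  (if (n < k')%N
   then 0
   else
    (if (n - k')%N == 0%N
     then 0
     else (if (n - k').-1 == 0%N then J k'.-1 else 0) *+ k') +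
    (if (n - k')%N == 0%N then J k' else 0)).
Proof.
rewrite /numer /denom /= -/(Qp k') coefD mulrBl mul1r coefB -(mulrA k'%:R 'X^2) (mulr_natl ('X^2 * Qp k')) coefMn !coefXnM.
by rewrite coefD coefMX coefC mulr_natl coefMn coefC.
Qed.

Lemma Fcoef_rec' k' n : (0 < k')%N -> (k'.+1 <= n)%N -> (2 <= n)%N ->
  Fcoef k'.+1 n = Fcoef k'.+1 (n - 2) *+ k'.
Proof.
case: n => [|[|m]] // k0 h _; rewrite subn2 /=; exact: Fcoef_rec.
Qed.

Lemma fps_main k' n : (0 < k')%N ->
  fps_mul (Fcoef k'.+1) (fps_of (denom k'.+1)) n = (numer k'.+1)`_n.
Proof.
move=> k0; rewrite fps_lhs coef_numer !coefQ.
case: (ltnP n k') => h1.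
  rewrite Fcoef_small; last lia.
  rewrite addr0.
  case: (ltnP 1 n) => h2.
    have -> : (n < 2)%N = false by apply/negbTE; lia.
    have -> : (n - 2 < k')%N = true by lia.
    rewrite Fcoef_small //; lia.
  have -> : (n < 2)%N = true by lia.
  by rewrite mul0rn.
case: (eqVneq n k') => [e|hne].
  subst n; rewrite Fcoef_small // subnn eqxx add0r.
  case: (ltnP 1 k') => h2.
    have -> : (k' < 2)%N = false by apply/negbTE; lia.
    have -> : (k' - 2 < k')%N = true by lia.
    rewrite Fcoef_small; last lia.
    by rewrite add0r addrC.
  have -> : (k' < 2)%N = true by lia.
  by rewrite mul0rn oppr0 !addr0 !add0r.
have h1' : (k' < n)%N by rewrite ltn_neqAle eq_sym hne h1.
have -> : (n - k' == 0)%N = false by apply/negbTE; lia.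
have -> : (n < 2)%N = false by apply/negbTE; lia.
have -> : (1 < n)%N = true by lia.
rewrite (Fcoef_rec' k0 h1'); last lia.
case: (eqVneq n k'.+1) => [e|hne2].
  subst n.
  have -> : (k'.+1 - k').-1 == 0%N by rewrite subSnn.
  have -> : (k'.+1 - 2 < k')%N = true by lia.
  rewrite Fcoef_small; last lia.
  have -> : (k'.+1 - 2 = k'.-1)%N by lia.
  by rewrite addr0 subrr sub0r addNr.
have h3 : (k'.+2 <= n)%N by rewrite ltn_neqAle eq_sym hne2 h1'.
have -> : (n - 2 < k')%N = false by apply/negbTE; lia.
have -> : ((n - k').-1 == 0)%N = false by apply/negbTE; lia.
by rewrite subrr !mul0rn oppr0 !addr0.
Qed.

Lemma numAvoid_rec' k' n : (0 < k')%N -> (k'.+1 <= n)%N -> (2 <= n)%N ->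
  numAvoid k'.+1 n = (k' * numAvoid k'.+1 (n - 2))%N.
Proof.
case: n => [|[|m]] // k0 h _; rewrite subn2 /=; exact: numAvoid_rec.
Qed.

Unset Implicit Arguments.

Theorem theorem3p1 (k : nat) (hk : (2 <= k)%N) :
  fps_mul (Fcoef k) (fps_of (denom k)) = fps_of (numer k)
  /\ (forall n : nat,
        numAvoid k (k + 2 * n)%N = ((k.-1) ^ n.+1 * Inv (k.-2))%N)
  /\ (forall n : nat,
        numAvoid k (k + 2 * n - 1)%N = ((k.-1) ^ n * Inv (k.-1))%N).
Proof.
case: k hk => [|k'] // hk.
have k0 : (0 < k')%N by lia.
split.
  apply: functional_extensionality => n; exact: fps_main.
split => n.
  elim: n => [|n IH].
    rewrite muln0 addn0 expn1 /=.
    rewrite numAvoid_rec'; [|lia|lia|lia].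
    have -> : (k'.+1 - 2 = k'.-1)%N by lia.
    by rewrite numAvoid_small //; lia.
  have -> : (k'.+1 + 2 * n.+1 = (k'.+1 + 2 * n).+2)%N by lia.
  rewrite numAvoid_rec; [|lia|lia].
  by rewrite IH /= [in RHS]expnS mulnA.
elim: n => [|n IH].
  rewrite muln0 addn0 expn0 mul1n subn1 /=.
  by rewrite numAvoid_small.
have -> : (k'.+1 + 2 * n.+1 - 1 = (k'.+1 + 2 * n - 1).+2)%N by lia.
rewrite numAvoid_rec; [|lia|lia].
by rewrite IH /= [in RHS]expnS mulnA.
Qed.
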